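(* Let $G=\mathrm{SL}_2(q)$ with $q$ even, and let $\mathcal{C}$ be the conjugacy class of an involution. Then $\mathcal{K}(G,\mathcal{C})$ equals the commuting graph on $\mathcal{C}$, and $K_{\mathcal{C}}$ is reducible and non-degenerate.
   Context: For a finite group $G$ and a subset $\mathcal{C}\subseteq G\setminus\{1\}$ closed under conjugation, the Killing form $K_{\mathcal{C}}$ is the bilinear form on the complex vector space with basis $\mathcal{C}$ given on basis elements by $K_{\mathcal{C}}(a,b)=|C_G(ab)\cap\mathcal{C}|$; it is non-degenerate if the matrix $(K_{\mathcal{C}}(a,b))_{a,b\in\mathcal{C}}$ is invertible. $\mathcal{K}(G,\mathcal{C})$ is the graph with vertex set $\mathcal{C}$ in which distinct $a,b$ are adjacent iff $C_G(ab)\cap\mathcal{C}\neq\emptyset$. $K_{\mathcal{C}}$ is irreducible if $\mathcal{K}(G,\mathcal{C})$ is connected and reducible otherwise. The commuting graph on $\mathcal{C}$ has vertex set $\mathcal{C}$, with distinct $a,b$ adjacent iff $ab=ba$. *)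

(* Defs.v *)
From HB Require Import structures.
From mathcomp Require Import all_boot all_order all_fingroup all_algebra all_field.
From mathcomp Require Import ssralg matrix algC.
Set Implicit Arguments. Unset Strict Implicit. Unset Printing Implicit Defensive.
Import GRing.Theory.

Local Open Scope group_scope.

Definition SL2 (F : finFieldType) : {set {'GL_2[F]}} :=
  [set g : {'GL_2[F]} | (\det (GLval g) == 1)%R].

Section KillingForm.
Variables (gT : finGroupType) (G C : {set gT}).

Definition killing_val (a b : gT) : nat := #|'C_G[a * b] :&: C|.

Definition killing_matrix : 'M[algC]_#|C| :=
  \matrix_(i, j) ((killing_val (enum_val i) (enum_val j))%:R)%R.

Definition killing_nondegenerate : bool := (\det killing_matrix != 0)%R.

Definition killing_adj (a b : gT) : bool :=
  [&& a \in C, b \in C, a != b & 'C_G[a * b] :&: C != set0].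

Definition commuting_adj (a b : gT) : bool :=
  [&& a \in C, b \in C, a != b & a * b == b * a].

Definition killing_graph_connected : bool :=
  [forall a in C, forall b in C, connect killing_adj a b].

Definition killing_irreducible : bool := killing_graph_connected.
Definition killing_reducible : bool := ~~ killing_graph_connected.

End KillingForm.

(* Main.v *)
Require Import Defs.
From mathcomp Require Import all_boot all_order all_fingroup all_algebra all_field.
From mathcomp Require Import ssralg matrix algC.
From mathcomp Require Import ring.
Set Implicit Arguments. Unset Strict Implicit. Unset Printing Implicit Defensive.
Import GRing.Theory Num.Theory.

Section M2.
Local Open Scope ring_scope.
Variable F : fieldType.

Lemma mul2E (A B : 'M[F]_2) i j : (A *m B) i j = A i 0 * B 0 j + A i 1 * B 1 j.
Proof. rewrite mxE !big_ord_recl big_ord0 addr0; by have -> : lift ord0 ord0 = 1 :> 'I_2 by apply: val_inj. Qed.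

Lemma mat2P (A B : 'M[F]_2) : A 0 0 = B 0 0 -> A 0 1 = B 0 1 -> A 1 0 = B 1 0 -> A 1 1 = B 1 1 -> A = B.
Proof.
move=> h1 h2 h3 h4; apply/matrixP => i j.
case: i => [[|[|i]] Hi]; case: j => [[|[|j]] Hj] //;
  (try have -> : Ordinal Hi = 0 by apply: val_inj);
  (try have -> : Ordinal Hi = 1 by apply: val_inj);
  (try have -> : Ordinal Hj = 0 by apply: val_inj);
  (try have -> : Ordinal Hj = 1 by apply: val_inj) => //.
Qed.
End M2.

Section M2b.
Local Open Scope ring_scope.
Variable F : fieldType.
Hypothesis h2 : (2 \in [pchar F])%N.

Lemma two0 : (2%:R : F) = 0. Proof. exact: pcharf0 h2. Qed.

Lemma entE (A B : 'M[F]_2) i j : A = B -> A i j = B i j. Proof. by move->. Qed.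
Tactic Notation "ent" constr(H) uconstr(i) uconstr(j) := let e := fresh "e" in
  have e := entE i j H; rewrite /= ?mul2E ?mxE /= in e.

Lemma trinv (X : 'M[F]_2) : X *m X = 1 -> X 0 0 = X 1 1.
Proof.
move=> H; ent H 0 0; ent H 0 1; ent H 1 1.
have [x01|x01] := eqVneq (X 0 1) 0.
  rewrite x01 ?mulr0 ?mul0r ?addr0 ?add0r in e e1.
  have : (X 0 0 - X 1 1) ^+ 2 = 0.
    have -> : (X 0 0 - X 1 1) ^+ 2 = X 0 0 * X 0 0 + X 1 1 * X 1 1 - 2%:R * (X 0 0 * X 1 1) by ring.
    by rewrite e e1 two0 mul0r subr0 addrr_pchar2.
  by move/eqP; rewrite expf_eq0 /= subr_eq0 => /eqP.
have e0' : X 0 0 * X 0 1 + X 0 1 * X 1 1 = 0 by rewrite e0.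
have : X 0 1 * (X 0 0 + X 1 1) = 0 by rewrite -e0'; ring.
move/eqP; rewrite mulf_eq0 (negPf x01) /= addr_eq0 => /eqP ->.
by rewrite oppr_pchar2.
Qed.
End M2b.

Section M2c.
Local Open Scope ring_scope.
Variable F : fieldType.
Lemma entE' (A B : 'M[F]_2) i j : A = B -> A i j = B i j. Proof. by move->. Qed.
Tactic Notation "ent" constr(H) uconstr(i) uconstr(j) := let e := fresh "e" in
  have e := entE' i j H; rewrite /= ?mul2E ?mxE /= in e.



Lemma nz2 (A : 'M[F]_2) : A 0 0 = 0 -> A 0 1 = 0 -> A 1 0 = 0 -> A 1 1 = 0 -> A = 0.
Proof. by move=> *; apply: mat2P; rewrite !mxE. Qed.

Lemma CM (A Z : 'M[F]_2) : A != 0 -> A *m A = 0 -> Z *m A = A *m Z ->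
  exists a b, [/\ Z 0 0 = a + b * A 0 0, Z 0 1 = b * A 0 1, Z 1 0 = b * A 1 0 & Z 1 1 = a + b * A 1 1].
Proof.
move=> nzA AA ZA.
ent AA 0 0; ent AA 0 1; ent AA 1 1; ent ZA 0 0; ent ZA 0 1; ent ZA 1 0.
set p := A 0 0 in e e0 e1 e2 e3 e4 nzA *.
set q := A 0 1 in e e0 e1 e2 e3 e4 nzA *.
set r := A 1 0 in e e0 e1 e2 e3 e4 nzA *.
set s := A 1 1 in e e0 e1 e2 e3 e4 nzA *.
have [q0|q0] := eqVneq q 0.
  have p0 : p = 0.
    by move: e; rewrite q0 mul0r addr0 => /eqP; rewrite mulf_eq0 orbb => /eqP.
  have s0 : s = 0.
    by move: e1; rewrite q0 mulr0 add0r => /eqP; rewrite mulf_eq0 orbb => /eqP.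
  have r0 : r != 0.
    apply: contraNneq nzA => r0; apply/eqP; apply: nz2; rewrite -?/p -?/q -?/r -?/s //.
  exists (Z 0 0), (Z 1 0 / r); rewrite p0 q0 s0 !mulr0 !addr0 divfK //; split => //.
    move: e2; rewrite p0 q0 !mulr0 !mul0r add0r addr0 => /eqP.
    by rewrite mulf_eq0 (negPf r0) orbF => /eqP.
  move: e4; rewrite p0 s0 !mulr0 !mul0r add0r addr0 => /eqP.
  by rewrite mulrC (inj_eq (mulfI r0)) => /eqP.
have sp : s = - p.
  have : q * (p + s) = 0 by rewrite -e0; ring.
  by move/eqP; rewrite mulf_eq0 (negPf q0) /= addrC addr_eq0 => /eqP.
exists (Z 0 0 - Z 0 1 / q * p), (Z 0 1 / q); split.
- ring.
- by rewrite divfK.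
- apply: (mulfI q0); rewrite (_ : q * (Z 0 1 / q * r) = Z 0 1 * r); last by field.
  move: e2; rewrite [Z 0 0 * p]mulrC => /addrI ->; ring.
- apply: (mulfI q0); rewrite sp.
  rewrite (_ : q * (Z 0 0 - Z 0 1 / q * p + Z 0 1 / q * - p) = q * Z 0 0 - (Z 0 1 * p) - Z 0 1 * p); last by field.
  move: e3; rewrite sp => e3.
  have -> : q * Z 1 1 = (p * Z 0 1 + q * Z 1 1) - p * Z 0 1 by ring.
  rewrite -e3; ring.
Qed.
End M2c.

Section M2d.
Local Open Scope ring_scope.
Variable F : fieldType.
Lemma entE2 (A B : 'M[F]_2) i j : A = B -> A i j = B i j. Proof. by move->. Qed.
Tactic Notation "ent" constr(H) uconstr(i) uconstr(j) := let e := fresh "e" in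
  have e := entE2 i j H; rewrite /= ?mul2E ?mxE /= in e.

Lemma CMcomm (A Y Z : 'M[F]_2) : A != 0 -> A *m A = 0 -> Y *m A = A *m Y -> Z *m A = A *m Z ->
  Y *m Z = Z *m Y.
Proof.
move=> nzA AA YA ZA.
have [a [b [y00 y01 y10 y11]]] := CM nzA AA YA.
have [c [d [z00 z01 z10 z11]]] := CM nzA AA ZA.
apply: mat2P; rewrite !mul2E ?y00 ?y01 ?y10 ?y11 ?z00 ?z01 ?z10 ?z11; ring.
Qed.

Lemma CMtr (A Z : 'M[F]_2) : A != 0 -> A *m A = 0 -> A 0 0 = A 1 1 -> Z *m A = A *m Z ->
  Z 0 0 = Z 1 1.
Proof.
move=> nzA AA tA ZA.
have [a [b [z00 z01 z10 z11]]] := CM nzA AA ZA.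
by rewrite z00 z11 tA.
Qed.

Lemma cross_comm (X Y : 'M[F]_2) : X 0 0 = X 1 1 -> Y 0 0 = Y 1 1 ->
   (X *m Y) 0 0 = (X *m Y) 1 1 -> X *m Y = Y *m X.
Proof.
rewrite !mul2E => hx hy e.
have cr : X 0 1 * Y 1 0 = X 1 0 * Y 0 1.
  by move: e; rewrite hx hy addrC => /addIr.
apply: mat2P; rewrite !mul2E ?hx ?hy.
- by rewrite cr; ring.
- ring.
- ring.
- rewrite -cr. ring.
Qed.
End M2d.

Section G.
Local Open Scope ring_scope.
Variable F : finFieldType.
Hypothesis h2 : (2 \in [pchar F])%N.
Local Notation gT := {'GL_2[F]}.

Lemma entE3 (A B : 'M[F]_2) i j : A = B -> A i j = B i j. Proof. by move->. Qed.
Tactic Notation "ent" constr(H) uconstr(i) uconstr(j) := let e := fresh "e" in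
  have e := entE3 i j H; rewrite /= ?mul2E ?mxE /= in e.

Lemma c2a (u v : F) : v - u - (u - v) = 0.
Proof. have -> : v - u - (u - v) = 2%:R * (v - u) by ring. by rewrite (two0 h2) mul0r. Qed.

Lemma inv_mx (x : gT) : (x * x = 1)%g -> GLval x *m GLval x = 1%:M.
Proof. by move/(congr1 GLval); rewrite GL_MxE. Qed.

Lemma comm_mxP (x y : gT) : commute x y <-> GLval x *m GLval y = GLval y *m GLval x.
Proof.
split; first by move/(congr1 GLval); rewrite !GL_MxE.
by move=> h; apply: val_inj; change (GLval (x * y)%g = GLval (y * x)%g); rewrite !GL_MxE.
Qed.

Lemma nilp (x : gT) : (x * x = 1)%g -> x != 1%g ->
  (GLval x - 1%:M) != 0 /\ (GLval x - 1%:M) *m (GLval x - 1%:M) = 0.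
Proof.
move=> xx x1; split.
  apply: contra x1 => /eqP h; apply/eqP; apply: val_inj => /=.
  by move/subr0_eq: h.
rewrite mulmxBl !mulmxBr !mulmx1 !mul1mx inv_mx //.
apply/matrixP => i j; rewrite !mxE.
by rewrite c2a.
Qed.

Lemma commA (x y : gT) : commute x y -> GLval y *m (GLval x - 1%:M) = (GLval x - 1%:M) *m GLval y.
Proof. by move/comm_mxP => h; rewrite mulmxBr mulmxBl mulmx1 mul1mx h. Qed.

Lemma G1 (x y z : gT) : (x * x = 1)%g -> x != 1%g -> commute x y -> commute x z -> commute y z.
Proof.
move=> xx x1 cy cz; have [nz AA] := nilp xx x1.
by apply/comm_mxP; apply: CMcomm nz AA (commA cy) (commA cz).
Qed.

Lemma G2 (a b c : gT) : (a * a = 1)%g -> (b * b = 1)%g -> (c * c = 1)%g -> c != 1%g ->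
  commute c (a * b) -> commute a b.
Proof.
move=> aa bb cc c1 cab; have [nz AA] := nilp cc c1.
apply/comm_mxP; apply: cross_comm; [apply: (trinv h2); exact: (inv_mx aa) | apply: (trinv h2); exact: inv_mx bb |].
have tD : (GLval c - 1%:M) 0 0 = (GLval c - 1%:M) 1 1.
  by rewrite !mxE /= (trinv h2 (inv_mx cc)).
by have := CMtr nz AA tD (commA cab); rewrite GL_MxE.
Qed.

Lemma sq1 (d : F) : d * d = 1 -> d = 1.
Proof.
move=> h; apply/eqP; rewrite -subr_eq0.
have : (d - 1) ^+ 2 == 0.
  have -> : (d - 1) ^+ 2 = d * d + 1 - 2%:R * d by ring.
  by rewrite h (two0 h2) mul0r subr0 addrr_pchar2.
by rewrite expf_eq0.
Qed.

Lemma commE (X Y : 'M[F]_2) : X *m Y = Y *m X -> X 0 1 * Y 1 0 = Y 0 1 * X 1 0.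
Proof. by move=> H; ent H 0 0; move: e; rewrite mulrC => /addrI. Qed.

Lemma SL1 : (1%g : gT) \in SL2 F.
Proof. by rewrite inE GL_1E det1. Qed.

Lemma SLM (x y : gT) : x \in SL2 F -> y \in SL2 F -> (x * y)%g \in SL2 F.
Proof. by rewrite !inE GL_MxE det_mulmx => /eqP -> /eqP ->; rewrite mulr1. Qed.

Lemma SLV (x : gT) : x \in SL2 F -> (x^-1)%g \in SL2 F.
Proof. by rewrite !inE GL_VxE det_inv => /eqP ->; rewrite invr1. Qed.

Lemma SLJ (x y : gT) : x \in SL2 F -> y \in SL2 F -> (x ^ y)%g \in SL2 F.
Proof. by move=> hx hy; rewrite conjgE !SLM // SLV. Qed.

Lemma mkGL (m : 'M[F]_2) : m *m m = 1%:M ->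
  exists g : gT, [/\ GLval g = m, g \in SL2 F & (g * g = 1)%g].
Proof.
move=> mm; have [mu _] := mulmx1_unit mm.
exists (FinRing.Unit (mu : (m : 'M[F]_(2.-1.+1)) \is a GRing.unit)); split => //.
  rewrite inE /=; apply/eqP/sq1; by rewrite -det_mulmx mm det1.
by apply: val_inj; exact: mm.
Qed.

Definition m1 : 'M[F]_2 := \matrix_(i, j) ((i : nat) != j)%:R.
Definition m2 : 'M[F]_2 := \matrix_(i, j) ((i : nat) <= j)%:R.

Lemma m1m1 : m1 *m m1 = 1%:M.
Proof. by apply: mat2P; rewrite !mul2E !mxE /=; ring. Qed.

Lemma m2m2 : m2 *m m2 = 1%:M.
Proof.
apply: mat2P; rewrite !mul2E !mxE /=; try ring.
by rewrite mul1r addrr_pchar2.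
Qed.

Lemma W (x : gT) : (x * x = 1)%g -> x != 1%g ->
  exists2 g, g \in SL2 F & ~ commute x (x ^ g)%g.
Proof.
move=> xx x1.
have tX := trinv h2 (inv_mx xx).
have XX := inv_mx xx; ent XX 0 0.
have conjE (g0 : gT) m : GLval g0 = m -> (g0 * g0 = 1)%g -> GLval (x ^ g0)%g = m *m GLval x *m m.
  move=> gm gg; have gV : (g0^-1 = g0)%g by rewrite -[(g0^-1)%g]mulg1 -gg mulKg.
  by rewrite conjgE gV !GL_MxE gm mulmxA.
have [x01|x01] := eqVneq (GLval x 0 1) (GLval x 1 0).
  have [g [gm gS gg]] := mkGL m2m2.
  exists g => // /comm_mxP/commE; rewrite (conjE g m2) // !mul2E !mxE /=.
  rewrite ?mul0r ?mul1r ?mulr0 ?mulr1 ?addr0 ?add0r -x01 -tX => h.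
  have : x 0 1 * x 0 1 == 0.
    rewrite h; have -> : (x 0 0 + x 0 1 + (x 0 1 + x 0 0)) * x 0 1 = 2%:R * ((x 0 0 + x 0 1) * x 0 1) by ring.
    by rewrite (two0 h2) mul0r.
  rewrite mulf_eq0 orbb => /eqP u0.
  move: e; rewrite u0 mul0r addr0 => /sq1 w1.
  apply: (negP x1); apply/eqP; apply: val_inj; change (GLval x = 1%:M).
  by apply: mat2P; rewrite !mxE /= -?x01 -?tX ?u0 ?w1.
have [g [gm gS gg]] := mkGL m1m1.
exists g => // /comm_mxP/commE; rewrite (conjE g m1) // !mul2E !mxE /=.
rewrite ?mul0r ?mul1r ?mulr0 ?mulr1 ?addr0 ?add0r => h.
move/eqP: x01; apply; apply/eqP; rewrite -subr_eq0.
have : (x 0 1 - x 1 0) ^+ 2 == 0.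
  have -> : (x 0 1 - x 1 0) ^+ 2 = x 0 1 * x 0 1 + x 1 0 * x 1 0 - 2%:R * (x 0 1 * x 1 0) by ring.
  by rewrite h (two0 h2) mul0r subr0 addrr_pchar2.
by rewrite expf_eq0.
Qed.

End G.
Section LA.
Local Open Scope ring_scope.
Variables (n : nat) (E : rel 'I_n) (m : 'I_n -> nat) (N : nat).
Hypotheses (Er : forall i, E i i) (Es : forall i j, E i j -> E j i)
  (Et : forall i j k, E i j -> E j k -> E i k)
  (mE : forall i, m i = #|[pred j | E i j]|) (mN : forall i, (m i < N)%N).

Lemma mEq i j : E i j -> m i = m j.
Proof.
move=> eij; rewrite !mE; apply: eq_card => k /=.
apply/idP/idP => h; [exact: Et (Es eij) h | exact: Et eij h].
Qed.

Lemma LA (M : 'M[algC]_n) :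
  (forall i j, M i j = (if i == j then N else if E i j then m i else 0%N)%:R) ->
  \det M != 0.
Proof.
move=> ME; apply/det0P => -[v nz vM]; apply: (negP nz); apply/eqP/rowP => k.
pose S j := \sum_(i | E i j) v 0 i.
have col j : (N - m j)%:R * v 0 j + (m j)%:R * S j = 0.
  have := congr1 (fun w : 'rV_n => w 0 j) vM; rewrite !mxE => <-.
  have dec i : M i j = (i == j)%:R * (N - m j)%:R + (E i j)%:R * (m j)%:R.
    rewrite ME; case: eqVneq => [->|nij]; first by rewrite Er !mul1r -natrD subnK // ltnW.
    rewrite mul0r add0r; case: ifP => eij; last by rewrite mul0r.
    by rewrite mul1r (mEq eij).
  under eq_bigr do rewrite dec mulrDr.
  rewrite big_split /= (bigD1 j) //= eqxx big1 => [|i /negPf ->]; last by rewrite !mul0r mulr0.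
  rewrite addr0 mul1r mulrC; congr (_ + _).
  rewrite /S big_mkcond mulr_sumr /=; apply: eq_bigr => i _.
  by case: (E i j); rewrite ?mul1r ?mul0r ?mulr0 // mulrC.
have Sk : S k = 0.
  have h : \sum_(j | E j k) ((N - m j)%:R * v 0 j + (m j)%:R * S j) = 0.
    by rewrite big1 // => j _; exact: col j.
  rewrite big_split /= in h.
  have h1 : \sum_(j | E j k) (N - m j)%:R * v 0 j = (N - m k)%:R * S k.
    rewrite /S mulr_sumr; apply: eq_bigr => j ejk; by rewrite (mEq ejk).
  have h2 : \sum_(j | E j k) (m j)%:R * S j = (m k * m k)%:R * S k.
    rewrite (eq_bigr (fun _ => (m k)%:R * S k)); last first.
      move=> j ejk; rewrite (mEq ejk); congr (_ * _); apply: eq_bigl => i.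
      by apply/idP/idP => h0; [exact: Et h0 ejk | exact: Et h0 (Es ejk)].
    rewrite sumr_const (_ : #|_| = m k); last first.
      by rewrite mE; apply: eq_card => j /=; apply/idP/idP => /Es.
    by rewrite -mulrnAl -mulr_natr -natrM.
  rewrite h1 h2 -mulrDl -natrD in h.
  move/eqP: h; rewrite mulf_eq0 pnatr_eq0 addn_eq0 subn_eq0 leqNgt mN /= => /eqP //.
move/eqP: (col k); rewrite Sk mulr0 addr0 mulf_eq0 pnatr_eq0 subn_eq0 leqNgt mN /= mxE.
by move/eqP.
Qed.
End LA.

Section Main.
Local Open Scope group_scope.
Variable F : finFieldType.
Hypothesis h2 : (2%N \in [pchar F])%R.
Local Notation gT := {'GL_2[F]}.
Variable t : gT.
Hypotheses (tS : t \in SL2 F) (tt : (t * t = 1)%g) (t1 : t != 1%g).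
Local Notation G := (SL2 F).
Local Notation C := (t ^: SL2 F)%g.

Lemma memC a : a \in C -> exists2 h, h \in G & a = (t ^ h)%g.
Proof. by case/imsetP => h hG ->; exists h. Qed.

Lemma invC a : a \in C -> (a * a = 1)%g /\ a != 1%g.
Proof.
case/memC => h _ ->; split; first by rewrite -conjMg tt conj1g.
by rewrite conjg_eq1.
Qed.

Lemma CG a : a \in C -> a \in G.
Proof. by case/memC => h hG ->; apply: SLJ. Qed.

Lemma tC : t \in C.
Proof. by rewrite -{1}(conjg1 t); apply: imset_f; apply: SL1. Qed.

Lemma conjC a g : a \in C -> g \in G -> (a ^ g)%g \in C.
Proof. by case/memC => h hG -> gG; rewrite -conjgM; apply: imset_f; apply: SLM. Qed.

Lemma ncC a : a \in C -> exists2 b, b \in C & ~ commute a b.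
Proof.
move=> aC; have [aa a1] := invC aC.
have [g gG nc] := W h2 aa a1.
by exists (a ^ g)%g => //; apply: conjC.
Qed.

Lemma part1 a b : killing_adj G C a b = commuting_adj C a b.
Proof.
rewrite /killing_adj /commuting_adj.
case aC: (a \in C); case bC: (b \in C); case: (a != b) => //=.
have [aa a1] := invC aC; have [bb b1] := invC bC.
apply/idP/idP.
  case/set0Pn => c /setIP [/setIP [cG /cent1P cab] cC].
  have [cc c1] := invC cC.
  by apply/eqP; apply: (G2 h2 aa bb cc c1).
move/eqP => ab; apply/set0Pn; exists a; rewrite !in_setI (CG aC) aC /= andbT.
by apply/cent1P; rewrite /commute -mulgA -ab.
Qed.

Lemma part2 : killing_reducible G C.
Proof.
rewrite /killing_reducible /killing_graph_connected.
have [b bC nc] := ncC tC.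
apply/negP => /forall_inP/(_ t tC)/forall_inP/(_ b bC) /connectP [p pth lst].
have step x y : x \in C -> commute t x -> killing_adj G C x y -> y \in C /\ commute t y.
  move=> xC tx; rewrite part1 => /and4P [_ yC _ /eqP xy]; split => //.
  have [xx x1] := invC xC.
  by have := G1 h2 xx x1 (esym tx); apply.
have key : forall p x, x \in C -> commute t x -> path (killing_adj G C) x p -> commute t (last x p).
  elim => [|y q IH] x xC tx //= /andP [exy pth'].
  have [yC ty] := step x y xC tx exy; exact: IH y yC ty pth'.
by apply: nc; rewrite lst; apply: key p t tC (erefl _) pth.
Qed.

Lemma part3 : killing_nondegenerate G C.
Proof.
rewrite /killing_nondegenerate.
pose f := fun i : 'I_#|C| => enum_val i.
have fC i : f i \in C := enum_valP i.
pose E := fun i j => f i * f j == f j * f i.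
pose m := fun i => #|'C[f i] :&: C|.
have Er i : E i i by rewrite /E eqxx.
have Es i j : E i j -> E j i by rewrite /E eq_sym.
have Et i j k : E i j -> E j k -> E i k.
  move=> /eqP hij /eqP hjk; apply/eqP.
  have [jj j1] := invC (fC j).
  by have := G1 h2 jj j1 (esym hij) hjk.
have mE i : m i = #|[pred j | E i j]|.
  rewrite /m -(card_imset _ (@enum_val_inj _ (mem C))); apply: eq_card => y.
  rewrite in_setI; apply/andP/imsetP.
    case=> /cent1P cy yC.
    have [j ej] : exists j, f j = y by exists (enum_rank_in yC y); exact: enum_rankK_in.
    exists j; last by rewrite -ej.
    rewrite inE; change (E i j); rewrite /E ej; apply/eqP; exact: esym cy.
  case=> j /= eij ->; split; last exact: enum_valP.
  by apply/cent1P; exact: esym (eqP eij).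
have mN i : (m i < #|C|)%N.
  apply: proper_card; apply/properP; split; first exact: subsetIr.
  have [b bC nc] := ncC (fC i).
  exists b => //; rewrite in_setI bC andbT; apply/cent1P => cb; apply: nc; exact: esym cb.
apply: (@LA _ E m #|C| Er Es Et mE mN) => i j.
rewrite mxE /killing_val; congr (_%:R)%R.
have [ii i1] := invC (fC i); have [jj j1] := invC (fC j).
have CsG : C \subset G by apply/subsetP => y; exact: CG.
case: eqVneq => [<-|nij].
  by rewrite -/(f i) ii cent11T setIT (setIidPr CsG).
case Eij : (E i j).
  have hab : commute (f i) (f j) by apply/eqP.
  rewrite /m; apply: eq_card => y; rewrite !in_setI.
  case yC : (y \in C); rewrite ?andbF // (CG yC) /= andbT.
  have abab : (f i * f j * (f i * f j) = 1)%g.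
    by rewrite -mulgA (mulgA (f j)) -hab -mulgA mulgA ii mul1g jj.
  have ab1 : (f i * f j != 1)%g.
    apply/negP => /eqP h; move/negP: nij; apply; apply/eqP; apply: enum_val_inj.
    by rewrite -/(f i) -/(f j) -[f i]mulg1 -jj mulgA h mul1g.
  have hab2 : commute (f i) (f i * f j) by rewrite /commute -mulgA -hab.
  rewrite ?andbT; apply/cent1P/cent1P => h.
    by apply: esym; have := G1 h2 abab ab1 (esym hab2) (esym h); apply.
  by apply: esym; have := G1 h2 ii i1 hab2 (esym h); apply.
rewrite (_ : _ :&: _ = set0) ?cards0 //.
apply/setP => y; rewrite in_set0 !in_setI; apply/negP => /andP [/andP [_ /cent1P h] yC].
have [yy y1] := invC yC.
have hab := G2 h2 ii jj yy y1 h.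
by rewrite /E hab eqxx in Eij.
Qed.

End Main.

Theorem proposition3p3 (F : finFieldType) (t : {'GL_2[F]}) :
  (2%N \in [pchar F])%R ->
  t \in SL2 F -> #[t]%g = 2 ->
  let C := (t ^: SL2 F)%g in
  killing_adj (SL2 F) C =2 commuting_adj C /\
  killing_reducible (SL2 F) C /\
  killing_nondegenerate (SL2 F) C.
Proof.
move=> h2 tS ot C.
have tt : (t * t = 1)%g by have := expg_order t; rewrite ot expgS expg1.
have t1 : t != 1%g by apply/eqP => h; move: ot; rewrite h order1.
split; first by move=> a b; apply: part1.
by split; [apply: part2 | apply: part3].
Qed.
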